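(* Let $r\geq 1$, let $\mathbf a=(a_1,\ldots,a_r)$ be positive integers, let $D$ be a positive common multiple of $a_1,\ldots,a_r$, and let $\sigma=a_1+\cdots+a_r$. For an integer $n\geq 0$ put $j=\lceil \frac{n+\sigma}{D}\rceil - r$ and $k= \lfloor \frac{n}{D}\rfloor - \lceil \frac{n+\sigma}{D} \rceil + r$. Then $$ (r-1)!\,p_{\mathbf a}(n) \equiv 0 \pmod{ (j+k+1)(j+k+2)\cdots (j+r-1)}, $$ where an empty product equals $1$.
   Context: $p_{\mathbf a}(n)$ is the number of integer solutions $(x_1,\ldots,x_r)$ of $a_1x_1+\cdots+a_rx_r=n$ with all $x_i\geq 0$. *)

(* Defs.v *)
From mathcomp Require Import all_boot all_order all_algebra.
Set Implicit Arguments. Unset Strict Implicit. Unset Printing Implicit Defensive.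
Import Order.TTheory GRing.Theory Num.Theory.

(* p_a(n): number of x in N^r with sum_i a_i x_i = n.  When every a_i >= 1,
   every solution has x_i <= n, so counting functions 'I_r -> 'I_(n+1)
   counts exactly all nonnegative integer solutions. *)
Definition p_a (r : nat) (a : 'I_r -> nat) (n : nat) : nat :=
  #|[set x : {ffun 'I_r -> 'I_n.+1} | (\sum_(i < r) a i * x i)%N == n]|.

Definition ceil_div (x d : nat) : nat := ((x + d.-1) %/ d)%N.

Definition jj (r D n sigma : nat) : int :=
  ((ceil_div (n + sigma) D)%:Z - r%:Z)%R.
Definition kk (r D n sigma : nat) : int :=
  ((n %/ D)%N%:Z - (ceil_div (n + sigma) D)%:Z + r%:Z)%R.

Definition int_range_prod (lo hi : int) : int :=
  if (lo <= hi)%R then (\prod_(t < `|(hi - lo + 1)%R|%N) (lo + t%:Z))%R else 1%R.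

(* Main.v *)
Require Import Defs.
From mathcomp Require Import all_boot all_order all_algebra.
Import Order.TTheory GRing.Theory Num.Theory.
From mathcomp Require Import zify.
Set Implicit Arguments. Unset Strict Implicit. Unset Printing Implicit Defensive.

Lemma ffact_add n m k : n ^_ (m + k) = n ^_ m * (n - m) ^_ k.
Proof.
elim: m n => [|m IH] n; first by rewrite add0n ffactn0 mul1n subn0.
rewrite addSn ffactnS IH ffactnS mulnA; congr (_ * _ ^_ _); lia.
Qed.

Lemma prod_ffact q L : \prod_(t < L) (q.+1 + t) = (q + L) ^_ L.
Proof.
elim: L => [|L IH]; first by rewrite big_ord0 ffactn0.
rewrite big_ord_recr /= IH addnS ffactSS mulnC addSn.
by [].
Qed.

Lemma dvd_ffact N r q L : N <= q -> q + L <= N + r -> (q + L) ^_ L %| (N + r) ^_ r.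
Proof.
move=> h1 h2.
set s := N + r.
have -> : r = (s - (q + L)) + (q + L - N) by lia.
rewrite ffact_add.
have -> : s - (s - (q + L)) = q + L by lia.
have -> : q + L - N = L + (q - N) by lia.
by rewrite ffact_add dvdn_mull // dvdn_mulr.
Qed.

Definition fcons (T : Type) r (t : T) (x : {ffun 'I_r -> T}) : {ffun 'I_r.+1 -> T} :=
  [ffun i => if unlift ord0 i is Some j then x j else t].

Lemma sum_fcons (T : finType) r (F : {ffun 'I_r.+1 -> T} -> nat) :
  \sum_x F x = \sum_(t : T) \sum_(x : {ffun 'I_r -> T}) F (fcons t x).
Proof.
rewrite pair_big /=.
rewrite (reindex (fun p : T * {ffun 'I_r -> T} => fcons p.1 p.2)) //.
exists (fun x : {ffun 'I_r.+1 -> T} => (x ord0, [ffun j => x (lift ord0 j)])).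
  move=> [t x] _ /=; rewrite /fcons ffunE unlift_none; congr (_, _).
  by apply/ffunP => j; rewrite !ffunE liftK.
move=> x _ /=; apply/ffunP => i; rewrite /fcons ffunE.
by case: unliftP => [j ->| ->]; rewrite ?ffunE.
Qed.

Lemma sum_fconsE (M : nat) r t (x : {ffun 'I_r -> 'I_M}) :
  \sum_i (fcons t x i : nat) = t + \sum_i (x i : nat).
Proof.
rewrite big_ord_recl /fcons ffunE unlift_none; congr (_ + _).
by apply: eq_bigr => i _; rewrite ffunE liftK.
Qed.

Lemma comp_step r M N :
  \sum_(y : {ffun 'I_r.+1 -> 'I_M}) nat_of_bool ((\sum_i (y i : nat)) == N) =
  \sum_(t : 'I_M) (t <= N) * \sum_(y : {ffun 'I_r -> 'I_M}) nat_of_bool ((\sum_i (y i : nat)) == N - t).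
Proof.
rewrite sum_fcons; apply: eq_bigr => t _.
case: (leqP t N) => htN.
  rewrite mul1n; apply: eq_bigr => x _; rewrite sum_fconsE.
  by congr (nat_of_bool _); apply/eqP/eqP; lia.
rewrite mul0n big1 // => x _; rewrite sum_fconsE.
by case: eqP => //; lia.
Qed.

Lemma comp_base M N :
  \sum_(y : {ffun 'I_0 -> 'I_M}) nat_of_bool ((\sum_i (y i : nat)) == N) = (N == 0).
Proof.
rewrite (big_pred1 [ffun i : 'I_0 => match i with Ordinal _ h => False_rect _ (notF h) end]).
  by rewrite big_ord0 eq_sym.
move=> y /=; apply/esym/eqP/ffunP => -[] //.
Qed.

Lemma sum_ind M N : N < M -> \sum_(t : 'I_M) nat_of_bool (t == N :> nat) = 1.
Proof.
move=> hN; rewrite (bigD1 (Ordinal hN)) //= eqxx big1 // => t /eqP ht.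
by case: eqP => // h; case: ht; apply: val_inj.
Qed.

Lemma hockey r N : \sum_(t < N.+1) 'C(N - t + r, r) = 'C(N + r.+1, r.+1).
Proof.
elim: N => [|N IH].
  by rewrite big_ord1 /= sub0n !add0n !binn.
rewrite big_ord_recl /= subn0.
under eq_bigr => i _ do rewrite /bump /= add1n subSS.
have -> : N.+1 + r.+1 = (N + r.+1).+1 by lia.
have -> : N.+1 + r = N + r.+1 by lia.
by rewrite IH binS addnC.
Qed.

Lemma comp_count r M N : N < M ->
  \sum_(y : {ffun 'I_r.+1 -> 'I_M}) nat_of_bool ((\sum_i (y i : nat)) == N) = 'C(N + r, r).
Proof.
elim: r N => [|r IH] N hN.
  rewrite comp_step bin0 -(sum_ind hN); apply: eq_bigr => t _.
  rewrite comp_base; case: (leqP t N) => h; last by case: eqP => //; lia.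
  by rewrite mul1n; congr (nat_of_bool _); apply/eqP/eqP; lia.
rewrite comp_step -hockey (big_ord_widen _ (fun t => 'C(N - t + r, r)) hN) [RHS]big_mkcond /=.
apply: eq_bigr => t _.
rewrite ltnS; case: (leqP t N) => h; rewrite ?mul1n ?mul0n // IH //.
lia.
Qed.

Definition zof r (a : 'I_r -> nat) D n (x : {ffun 'I_r -> 'I_n.+1}) : {ffun 'I_r -> 'I_n.+1} :=
  [ffun i => inord (x i %% (D %/ a i))].
Definition yof r (a : 'I_r -> nat) D n (x : {ffun 'I_r -> 'I_n.+1}) : {ffun 'I_r -> 'I_n.+1} :=
  [ffun i => inord (x i %/ (D %/ a i))].
Definition hz r (a : 'I_r -> nat) D n (z y : {ffun 'I_r -> 'I_n.+1}) : {ffun 'I_r -> 'I_n.+1} :=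
  [ffun i => inord (z i + D %/ a i * y i)].

Lemma zofE r a D n (x : {ffun 'I_r -> 'I_n.+1}) i : (zof a D x i : nat) = x i %% (D %/ a i).
Proof. by rewrite ffunE inordK // ltnS (leq_trans (leq_mod _ _)) // -ltnS. Qed.

Lemma yofE r a D n (x : {ffun 'I_r -> 'I_n.+1}) i : (yof a D x i : nat) = x i %/ (D %/ a i).
Proof. by rewrite ffunE inordK // ltnS (leq_trans (leq_div _ _)) // -ltnS. Qed.

Lemma sum_decomp r (a : 'I_r -> nat) D n (x : {ffun 'I_r -> 'I_n.+1}) : (forall i, a i %| D) ->
  \sum_(i < r) a i * x i = \sum_(i < r) a i * zof a D x i + D * \sum_i (yof a D x i : nat).
Proof.
move=> hdv; rewrite big_distrr -big_split; apply: eq_bigr => i _ /=.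
rewrite zofE yofE {1}(divn_eq (x i) (D %/ a i)).
have hD : a i * (D %/ a i) = D by rewrite mulnC divnK.
move: hD; set e := D %/ a i; move=> hD; rewrite -hD; nia.
Qed.

Lemma fiber r (a : 'I_r -> nat) D n (z x0 : {ffun 'I_r -> 'I_n.+1}) :
  (forall i, 0 < a i) -> 0 < D -> (forall i, a i %| D) ->
  \sum_(i < r) a i * x0 i = n -> zof a D x0 = z ->
  \sum_(x : {ffun 'I_r -> 'I_n.+1} | (\sum_(i < r) a i * x i == n) && (zof a D x == z)) 1 =
  \sum_(y : {ffun 'I_r -> 'I_n.+1}) nat_of_bool ((\sum_i (y i : nat)) == \sum_i (yof a D x0 i : nat)).
Proof.
move=> ha hD hdv Hx0 Hz0.
set N := \sum_i (yof a D x0 i : nat).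
set W := \sum_(i < r) a i * z i.
have hDa i : a i * (D %/ a i) = D by rewrite mulnC divnK.
have He i : 0 < D %/ a i by rewrite divn_gt0 // dvdn_leq.
have Hn : n = W + D * N by rewrite -Hx0 (sum_decomp _ hdv) Hz0.
have Hz i : (z i : nat) < D %/ a i by rewrite -Hz0 zofE ltn_pmod.
rewrite (reindex_onto (hz a D z) (@yof _ a D n)); last first.
  move=> x /andP [_ /eqP hx]; apply/ffunP => i; rewrite ffunE -hx zofE yofE.
  by rewrite addnC mulnC -divn_eq inord_val.
rewrite big_mkcond [RHS]big_mkcond /=; apply: eq_bigr => y _.
set v := fun i => (z i : nat) + D %/ a i * y i.
have Hv : \sum_(i < r) a i * v i = W + D * \sum_i (y i : nat).
  rewrite big_distrr -big_split; apply: eq_bigr => i _ /=.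
  by rewrite /v mulnDr mulnA hDa.
case Hs: (\sum_i (y i : nat) == N).
  have Hvn : \sum_(i < r) a i * v i = n by rewrite Hv (eqP Hs) Hn.
  have vb i : v i < n.+1.
    rewrite ltnS -Hvn (bigD1 i) //=.
    exact: leq_trans (leq_pmull _ (ha i)) (leq_addr _ _).
  have hzE i : (hz a D z y i : nat) = v i by rewrite ffunE inordK //; apply: vb.
  have -> : \sum_(i < r) a i * hz a D z y i = n.
    by rewrite -[in RHS]Hvn; apply: eq_bigr => i _; rewrite hzE.
  have -> : zof a D (hz a D z y) = z.
    apply/ffunP => i; apply: ord_inj; rewrite zofE hzE /v.
    by rewrite addnC mulnC modnMDl modn_small.
  have -> : yof a D (hz a D z y) = y.
    apply/ffunP => i; apply: ord_inj; rewrite yofE hzE /v.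
    by rewrite addnC mulnC divnMDl // divn_small // addn0.
  by rewrite !eqxx.
case: ifP => // /andP [/andP [/eqP h1 /eqP h2] /eqP h3].
have := sum_decomp (hz a D z y) hdv; rewrite h1 h2 h3 -/W => h4.
have : D * \sum_i (y i : nat) = D * N by lia.
by move/eqP; rewrite eqn_pmul2l // Hs.
Qed.

Lemma main_nat r (a : 'I_r.+1 -> nat) D n :
  (forall i, 0 < a i) -> 0 < D -> (forall i, a i %| D) ->
  let c := ceil_div (n + \sum_(i < r.+1) a i) D in let q := n %/ D in
  q.+1 <= c.-1 -> (c.-1) ^_ (c.-1 - q) %| r`! * p_a a n.
Proof.
move=> ha hD hdv c q hqc.
rewrite /p_a -sum1_card.
under eq_bigl => x do rewrite in_set.
rewrite (partition_big (@zof _ a D n) xpredT) // big_distrr /=.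
apply: dvdn_sum => z _.
case: (pickP (fun x : {ffun 'I_r.+1 -> 'I_n.+1} => (\sum_(i < r.+1) a i * x i == n) && (zof a D x == z)))
   => [x0 /andP [/eqP Hx0 /eqP Hz0] | none]; last first.
  by rewrite big_pred0 // muln0 dvdn0.
rewrite (fiber ha hD hdv Hx0 Hz0).
set N := \sum_i (yof a D x0 i : nat).
set W := \sum_(i < r.+1) a i * z i.
have Hn : n = W + D * N by rewrite -Hx0 (sum_decomp _ hdv) Hz0.
have HNq : N <= q by rewrite /q leq_divRL // mulnC Hn leq_addl.
rewrite comp_count; last by rewrite ltnS (leq_trans HNq) // leq_div.
rewrite mulnC bin_ffact.
have hDa i : a i * (D %/ a i) = D by rewrite mulnC divnK.
have Hz i : (z i : nat) < D %/ a i by rewrite -Hz0 zofE ltn_pmod // divn_gt0 // dvdn_leq.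
have HW : W + \sum_(i < r.+1) a i <= r.+1 * D.
  have <- : \sum_(i < r.+1) D = r.+1 * D by rewrite sum_nat_const card_ord.
  rewrite -big_split /=.
  apply: leq_sum => i _; rewrite -[X in _ <= X](hDa i) -mulnSr leq_mul2l.
  by rewrite Hz orbT.
have Hc : c < N + r.+2.
  rewrite /c /ceil_div ltn_divLR //.
  move: HW; rewrite Hn; nia.
have := dvd_ffact HNq (_ : q + (c.-1 - q) <= N + r).
rewrite (_ : q + (c.-1 - q) = c.-1); last lia.
apply; lia.
Qed.

Unset Implicit Arguments.

Theorem corollary2p4 (r : nat) (a : 'I_r -> nat) (D n : nat) :
  (1 <= r)%N ->
  (forall i, (0 < a i)%N) ->
  (0 < D)%N ->
  (forall i, (a i %| D)%N) ->
  let sigma := (\sum_(i < r) a i)%N in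
  let j := jj r D n sigma in
  let k := kk r D n sigma in
  (int_range_prod (j + k + 1) (j + r%:Z - 1) %| ((r.-1)`! * p_a a n)%N%:Z)%Z.
Proof.
case: r a => [|r] a; first by [].
move=> _ ha hD hdv; cbv zeta.
set sigma := \sum_(i < r.+1) a i.
set j := jj r.+1 D n sigma.
set k := kk r.+1 D n sigma.
rewrite /int_range_prod.
set c := ceil_div (n + sigma) D.
set q := n %/ D.
have Elo : (j + k + 1 = (q.+1)%:Z)%R by rewrite /j /k /jj /kk; lia.
case: ifP => [hle|_]; last exact: dvd1z.
have hqc : q.+1 <= c.-1.
  move: hle; rewrite Elo /j /jj -/c; lia.
have Ehi : (j + (r.+1)%:Z - 1 = (c.-1)%:Z)%R by rewrite /j /jj -/c; lia.
rewrite Elo Ehi.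
have -> : `|((c.-1)%:Z - (q.+1)%:Z + 1)%R|%N = c.-1 - q.
  have -> : ((c.-1)%:Z - (q.+1)%:Z + 1 = (c.-1 - q)%:Z)%R by lia.
  by [].
under eq_bigr => t _ do rewrite -PoszD.
rewrite -(big_morph Posz PoszM (erefl (Posz 1))) prod_ffact.
rewrite (_ : q + (c.-1 - q) = c.-1); last lia.
by rewrite dvdzE /=; apply: main_nat.
Qed.
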